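(* The operad morphism $\gamma:\operatorname{Arb}\to\operatorname{Zinb}$ is injective (i.e. $\gamma:\operatorname{Arb}(I)\to\operatorname{Zinb}(I)$ is injective for every finite set $I$), and so is the composite morphism $\kappa=\iota\circ\gamma:\operatorname{Arb}\to\operatorname{Mould}$.
   Context: A shrub $P$ on a finite set $I$ is a set $E$ of edges (unordered pairs of distinct elements of $I$) with a height function $h_P:I\to\mathbb{N}$; $j$ covers $i$ if $\{i,j\}\in E$ and $h_P(j)=h_P(i)+1$. Axioms: (1) edges join vertices whose heights differ by $1$; (2) every vertex of positive height covers some vertex; (3) no four distinct $a,b,c,d$ with $a$ covering $b$ and $c$, $c$ covering $d$, $\{b,d\}\notin E$; (4) no five distinct $a,b,c,d,e$ with $a$ covering $c,d$, $b$ covering $d,e$, $\{a,e\}\notin E$, $\{b,c\}\notin E$. $\operatorname{Arb}(I)$ is the set of shrubs on $I$; it is a set-theoretic operad with composition $P\circ_i P'$ = the shrub on $(I\setminus\{i\})\sqcup I'$ with height $h_P$ on $I\setminus\{i\}$, $h_{P'}+h_P(i)$ on $I'$, and edges those of $P$ not containing $i$, those of $P'$, and all $\{j,k\}$ with $j$ adjacent to $i$ in $P$ and $k$ of height $0$ in $P'$. $\operatorname{Zinb}(I)$ is the $\mathbb{Q}$-vector space with basis the total orders on $I$, with the Zinbiel operad structure (composition $\pi\circ_i\sigma$ = sum of the total orders extending $\preceq$, where $a\preceq b$ iff ($a,b\in I$, $a\le_\pi b$) or ($a,b\in I'$, $a\le_\sigma b$) or ($a\in I$, $b\in I'$, $a\le_\pi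 i$)). $\gamma:\operatorname{Arb}\to\operatorname{Zinb}$ is the operad morphism sending a shrub $P$ to the sum of all total orders $<$ on $I$ compatible with $P$, i.e. such that every vertex $i$ of positive height covers some $j$ with $j<i$. $\operatorname{Mould}(I)=\mathbb{Q}(u_i:i\in I)$ with $f\circ_i g=(\sum_{j\in J}u_j)\,g\,f|_{u_i=\sum_{j\in J}u_j}$, and $\iota:\operatorname{Zinb}\to\operatorname{Mould}$ is the (linear, injective) operad morphism sending a total order $\pi$ on $I$ to $1/\prod_{i\in I}\sum_{j\ge_\pi i}u_j$. *)

(* Defs.v *)
From HB Require Import structures.
From mathcomp Require Import all_boot all_order all_algebra.
From mathcomp Require Import fraction.
From mathcomp Require Import mpoly.
Set Implicit Arguments. Unset Strict Implicit. Unset Printing Implicit Defensive.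
Import Order.TTheory GRing.Theory Num.Theory.
Local Open Scope ring_scope.

Section Shrubs.
Variable I : finType.

(* A shrub datum: a set E of edges (unordered pairs, i.e. 2-element subsets
   of I) together with a height function h : I -> nat. *)
Definition shrub_data := ({set {set I}} * {ffun I -> nat})%type.

Definition edges (P : shrub_data) : {set {set I}} := P.1.
Definition height (P : shrub_data) : I -> nat := P.2.

Definition adj (P : shrub_data) (i j : I) : bool := [set i; j] \in edges P.

Definition covers (P : shrub_data) (j i : I) : bool :=
  adj P i j && (height P j == (height P i).+1)%N.

Definition is_shrub (P : shrub_data) : Prop :=
  (forall e, e \in edges P -> exists a b, a != b /\ e = [set a; b]) /\
  (forall a b, a != b -> adj P a b ->
      height P a = (height P b).+1 \/ height P b = (height P a).+1) /\
  (forall i, (0 < height P i)%N -> exists j, covers P i j) /\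
  (~ exists a b c d, uniq [:: a; b; c; d] /\
       covers P a b /\ covers P a c /\ covers P c d /\ ~~ adj P b d) /\
  (~ exists a b c d e, uniq [:: a; b; c; d; e] /\
       covers P a c /\ covers P a d /\ covers P b d /\ covers P b e /\
       ~~ adj P a e /\ ~~ adj P b c).

(* Binary relations on I, encoded as finite functions: r i j means i <= j. *)
Definition relI := {ffun I -> {ffun I -> bool}}.

Definition is_total_order (r : relI) : bool :=
  [forall i, r i i] &&
  [forall i, forall j, r i j && r j i ==> (i == j)] &&
  [forall i, forall j, forall k, r i j && r j k ==> r i k] &&
  [forall i, forall j, r i j || r j i].

Definition compatible (P : shrub_data) (r : relI) : bool :=
  [forall i, (0 < height P i)%N ==>
     [exists j, covers P i j && r j i && (j != i)]].

(* Zinb(I): Q-vector space with basis the total orders on I; elements are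
   rational coefficient functions on relations supported on total orders. *)
Definition Zinb := {ffun relI -> rat}.

Definition zbasis (r : relI) : Zinb := [ffun s => (s == r)%:R].

Definition gamma (P : shrub_data) : Zinb :=
  \sum_(r | is_total_order r && compatible P r) zbasis r.

Definition Mould := {fraction {mpoly rat[#|I|]}}.

Definition u (i : I) : Mould := tofrac ('X_(enum_rank i) : {mpoly rat[#|I|]}).

Definition iota_basis (r : relI) : Mould :=
  (\prod_i \sum_(j | r i j) u j)^-1.

Definition iota (z : Zinb) : Mould :=
  \sum_(r | is_total_order r) (ratr (z r) : Mould) * iota_basis r.

Definition kappa (P : shrub_data) : Mould := iota (gamma P).

End Shrubs.

(* Main.v *)
Require Import Defs.
From HB Require Import structures.
From mathcomp Require Import all_boot all_order all_algebra.
From mathcomp Require Import fraction.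
From mathcomp Require Import mpoly.
From mathcomp Require Import zify.
Set Implicit Arguments. Unset Strict Implicit. Unset Printing Implicit Defensive.
Import Order.TTheory GRing.Theory Num.Theory.

Section PartA.
Variable I : finType.

Lemma gammaE (P : shrub_data I) r :
  gamma P r = ((is_total_order r && compatible P r) : nat)%:R%R.
Proof.
rewrite /gamma sum_ffunE.
case: (boolP (is_total_order r && compatible P r)) => Hr.
  rewrite (bigD1 r) //= ffunE eqxx big1 ?addr0 // => s /andP[_ Hs].
  by rewrite ffunE eq_sym (negbTE Hs).
rewrite big1 // => s Hs; rewrite ffunE; case: eqP => // E.
by rewrite E Hs in Hr.
Qed.

Definition lexr (k : I -> nat) : relI I :=
  [ffun x => [ffun y => (k x < k y)%N ||
      ((k x == k y) && (enum_rank x <= enum_rank y)%N)]].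

Lemma lexr_total k : is_total_order (lexr k).
Proof.
apply/andP; split; [apply/andP; split; [apply/andP; split|]|].
- by apply/forallP => x; rewrite !ffunE eqxx leqnn orbT.
- apply/forallP => x; apply/forallP => y; apply/implyP; rewrite !ffunE.
  move=> H; apply/eqP; apply: enum_rank_inj; apply: ord_inj.
  case/andP: H; lia.
- apply/forallP => x; apply/forallP => y; apply/forallP => z; apply/implyP.
  rewrite !ffunE; case/andP; lia.
- apply/forallP => x; apply/forallP => y; rewrite !ffunE; lia.
Qed.

Lemma lexr_lt k x y : (k x < k y)%N -> lexr k x y && (x != y).
Proof.
move=> H; rewrite !ffunE H /=; apply/eqP => E; rewrite E in H.
by rewrite ltnn in H.
Qed.

Lemma lexr_le k x y : lexr k x y -> (k x <= k y)%N.
Proof. rewrite !ffunE; lia. Qed.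

Lemma lexr_compat (P : shrub_data I) k :
  (forall x, (0 < height P x)%N -> exists y, covers P x y && (k y < k x)%N) ->
  compatible P (lexr k).
Proof.
move=> H; apply/forallP => x; apply/implyP => /H [y /andP[c l]].
apply/existsP; exists y; rewrite c /=.
by have /andP[-> ->] := lexr_lt l.
Qed.

End PartA.

Section PartB.
Variable I : finType.
Implicit Types P : shrub_data I.

Lemma compatP P r i : compatible P r -> (0 < height P i)%N ->
  exists j, [/\ covers P i j, r j i & j != i].
Proof.
move/forallP/(_ i)/implyP => H /H /existsP [j /andP[/andP[a b] c]].
by exists j.
Qed.

Lemma adjC P a b : adj P a b = adj P b a.
Proof. by rewrite /adj setUC. Qed.

Lemma height_le P1 P2 : is_shrub P1 ->
  (forall r, is_total_order r -> compatible P1 r -> compatible P2 r) ->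
  forall x, (height P2 x <= height P1 x)%N.
Proof.
move=> [_ [_ [H2 _]]] Hc.
suff: forall n x, (height P1 x < n)%N -> (height P2 x <= height P1 x)%N.
  by move=> H x; apply: (H _ x (ltnSn _)).
elim=> [|n IH] x Hx //.
set k := fun y => if y == x then (2 * height P1 x)%N else (2 * height P1 y + 1)%N.
have C1 : compatible P1 (lexr k).
  apply: lexr_compat => y Hy; have [z cz] := H2 _ Hy; have /andP[_ /eqP ez] := cz.
  exists z; apply/andP; split => //; rewrite /k.
  case: (eqVneq y x) => [eyx|nyx]; case: (eqVneq z x) => [ezx|nzx].
  - by move: ez; rewrite eyx ezx; lia.
  - move: ez; rewrite -eyx; lia.
  - move: ez; rewrite ezx; lia.
  - move: ez; lia.
case: (posnP (height P2 x)) => [-> //|Hp].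
have [j [/andP[_ /eqP ej] rj nj]] := compatP (Hc _ (lexr_total k) C1) Hp.
have := lexr_le rj; rewrite /k eqxx (negbTE nj) => lj.
have hj : (height P1 j < n)%N.
  move: Hx lj. lia.
have := IH j hj; rewrite ej; move: lj; lia.
Qed.


Lemma edge_sub P1 P2 : is_shrub P1 ->
  (forall r, is_total_order r -> compatible P1 r -> compatible P2 r) ->
  height P2 =1 height P1 ->
  forall a b, adj P1 a b -> height P1 b = (height P1 a).+1 -> adj P2 a b.
Proof.
move=> [_ [_ [H2 _]]] Hc Hh a b ab hb.
set k := fun y => if y == a then (3 * height P1 a + 1)%N else
   if y == b then (3 * height P1 a + 2)%N else (3 * height P1 y + 3)%N.
have nab : b != a by apply/eqP => E; move: hb; rewrite E; lia.
have C1 : compatible P1 (lexr k).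
  apply: lexr_compat => y Hy.
  case: (eqVneq y b) => [->|nyb].
    exists a; rewrite /covers ab hb eqxx /= /k (negbTE nab) !eqxx; lia.
  have [z cz] := H2 _ Hy; have /andP[_ /eqP ez] := cz.
  exists z; apply/andP; split => //; rewrite /k (negbTE nyb).
  case: (eqVneq y a) => [eya|nya]; case: (eqVneq z a) => [eza|nza];
    case: (eqVneq z b) => [ezb|nzb]; subst => //; try lia.
have Hpb : (0 < height P2 b)%N by rewrite Hh hb.
have [j [/andP[aj /eqP ej] rj nj]] := compatP (Hc _ (lexr_total k) C1) Hpb.
case: (eqVneq j a) => [<- //|nja].
have := lexr_le rj; rewrite /k (negbTE nja) (negbTE nj) eqxx (negbTE nab).
by move: ej; rewrite !Hh hb; lia.
Qed.

Lemma inj_of_compat P1 P2 : is_shrub P1 -> is_shrub P2 ->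
  (forall r, is_total_order r -> compatible P1 r = compatible P2 r) -> P1 = P2.
Proof.
move=> S1 S2 Hc.
have C12 : forall r, is_total_order r -> compatible P1 r -> compatible P2 r.
  by move=> r t; rewrite Hc.
have C21 : forall r, is_total_order r -> compatible P2 r -> compatible P1 r.
  by move=> r t; rewrite Hc.
have Hh : height P2 =1 height P1.
  by move=> x; apply/eqP; rewrite eqn_leq !height_le.
have Hh' : height P1 =1 height P2 by move=> x; rewrite Hh.
have Esub : forall Q1 Q2 : shrub_data I, is_shrub Q1 ->
   (forall r, is_total_order r -> compatible Q1 r -> compatible Q2 r) ->
   height Q2 =1 height Q1 -> forall e, e \in edges Q1 -> e \in edges Q2.
  move=> Q1 Q2 T1 C Hq e He.
  have [[x [y [nxy Ee]]] [H1 _]] := (T1.1 e He, T1.2).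
  have axy : adj Q1 x y by rewrite /adj -Ee.
  rewrite Ee; change (adj Q2 x y).
  case: (H1 x y nxy axy) => hxy.
    by rewrite adjC; apply: (edge_sub T1 C Hq); rewrite // adjC.
  exact: (edge_sub T1 C Hq).
case: P1 Hc S1 C12 C21 Hh Hh' Esub => E1 g1 Hc S1 C12 C21 Hh Hh' Esub.
case: P2 Hc S2 C12 C21 Hh Hh' Esub => E2 g2 Hc S2 C12 C21 Hh Hh' Esub.
congr pair.
  by apply/setP => e; apply/idP/idP; [apply: (Esub _ _ S1 C12)|apply: (Esub _ _ S2 C21)].
by apply/ffunP => x; rewrite -[g1 x]/(height (E1, g1) x) Hh'.
Qed.

Lemma gamma_inj P1 P2 : is_shrub P1 -> is_shrub P2 -> gamma P1 = gamma P2 -> P1 = P2.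
Proof.
move=> S1 S2 E; apply: inj_of_compat => // r t.
have := congr1 (fun z : Zinb I => z r) E; rewrite !gammaE t /=.
by move/eqP; rewrite eqr_nat; case: (compatible P1 r); case: (compatible P2 r).
Qed.

End PartB.

Section Chains.
Variable T : finType.
Implicit Types (S U V : {set T}) (K : {set {set T}}) (l : T).

Definition maxchain S K : bool :=
  [forall U in K, (U \subset S) && (U != set0)] &&
  [forall U in K, forall V in K, (U \subset V) || (V \subset U)] &&
  (#|K| == #|S|).

Lemma mcP S K : maxchain S K ->
  [/\ forall U, U \in K -> U \subset S /\ U != set0,
      forall U V, U \in K -> V \in K -> (U \subset V) || (V \subset U)
    & #|K| = #|S| ].
Proof.
case/andP=> /andP[/forall_inP H1 /forall_inP H2] /eqP H3; split => //.
  by move=> U /H1 /andP[].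
by move=> U V /H2 /forall_inP H /H.
Qed.

Lemma mc_l S K l U : maxchain S K -> [set l] \in K -> U \in K -> l \in U.
Proof.
case/mcP=> H1 H2 _ Hl HU.
case/orP: (H2 _ _ Hl HU); first by rewrite sub1set.
rewrite subset1 (negbTE (H1 U HU).2) orbF => /eqP ->; exact: set11.
Qed.

Definition proj l K : {set {set T}} := [set U :\ l | U in K :\ [set l]].

Lemma setD1_in l U V : l \in U -> l \in V -> U :\ l = V :\ l -> U = V.
Proof. by move=> a b E; rewrite -(setD1K a) -(setD1K b) E. Qed.

Lemma memK S K l U : maxchain S K -> [set l] \in K ->
  (U \in K) = (l \in U) && ((U == [set l]) || (U :\ l \in proj l K)).
Proof.
move=> M Hl; apply/idP/idP.
  move=> HU; rewrite (mc_l M Hl HU) /=; case: eqP => //= /eqP ne.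
  by apply/imsetP; exists U => //; rewrite !inE ne.
case/andP=> lU /orP[/eqP -> //|/imsetP [V]].
rewrite !inE => /andP[nV VK] E.
by rewrite (setD1_in lU (mc_l M Hl VK) E).
Qed.

Lemma proj_inj S K1 K2 l : maxchain S K1 -> maxchain S K2 ->
  [set l] \in K1 -> [set l] \in K2 -> proj l K1 = proj l K2 -> K1 = K2.
Proof.
move=> M1 M2 H1 H2 E; apply/setP => U.
by rewrite (memK _ M1 H1) (memK _ M2 H2) E.
Qed.

Lemma setD1_eq0 l U : l \in U -> (U :\ l == set0) = (U == [set l]).
Proof.
move=> lU; rewrite setD_eq0 subset1; case: eqP => //= E.
by apply/eqP => E2; rewrite E2 in lU; rewrite inE in lU.
Qed.

Lemma proj_mc S K l : maxchain S K -> [set l] \in K -> l \in S ->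
  maxchain (S :\ l) (proj l K).
Proof.
move=> M Hl lS; have [H1 H2 H3] := mcP M.
apply/andP; split; [apply/andP; split|].
- apply/forall_inP => V /imsetP [U]; rewrite !inE => /andP[nU UK] ->.
  rewrite setSD ?(H1 U UK).1 //= setD1_eq0 ?nU //; exact: mc_l M Hl UK.
- apply/forall_inP => V /imsetP [U]; rewrite !inE => /andP[_ UK] ->.
  apply/forall_inP => W /imsetP [U']; rewrite !inE => /andP[_ UK'] ->.
  by case/orP: (H2 _ _ UK UK') => H; rewrite (setSD _ H) ?orbT.
- rewrite card_in_imset.
    have := cardsD1 [set l] K; have := cardsD1 l S; rewrite Hl lS H3 /= => a b.
    by rewrite -(eqn_add2l 1) -a -b.
  move=> U V; rewrite !inE => /andP[_ UK] /andP[_ VK].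
  exact: setD1_in (mc_l M Hl UK) (mc_l M Hl VK).
Qed.

Lemma mc_single S K : maxchain S K -> S != set0 -> exists l, [set l] \in K.
Proof.
move=> M nS; have [H1 H2 H3] := mcP M.
pose s := [seq #|U| | U <- enum K].
have us : uniq s.
  rewrite map_inj_in_uniq ?enum_uniq // => U V; rewrite !mem_enum => UK VK E.
  case/orP: (H2 _ _ UK VK) => H; apply/eqP.
    by rewrite eqEcard H /=; apply: eq_leq; exact: (esym E).
  by rewrite eq_sym eqEcard H /=; apply: eq_leq; exact: E.
have sub : {subset s <= seq.iota 1 #|S|}.
  move=> k /mapP [U]; rewrite mem_enum => UK ->; rewrite seq.mem_iota.
  have [a b] := H1 U UK.
  rewrite card_gt0 b /= add1n ltnS; exact: subset_leq_card.
have szE : (size (seq.iota 1 #|S|) <= size s)%N.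
  by rewrite seq.size_iota size_map -cardE H3.
have [_ E] := uniq_min_size us sub szE.
have : 1%N \in s by rewrite E seq.mem_iota leqnn /= add1n ltnS card_gt0.
case/mapP => U; rewrite mem_enum => UK /esym/eqP/cards1P [l El].
by exists l; rewrite -El.
Qed.

End Chains.

Section Core.
Local Open Scope ring_scope.
Variables (T : finType) (R : idomainType) (x : T -> R).
Implicit Types (S U V : {set T}) (K : {set {set T}}) (l : T).

Definition sigU U := \sum_(j in U) x j.
Definition Nprod S K :=
  \prod_(U : {set T} | (U \subset S) && (U != set0) && (U \notin K)) sigU U.
Definition Qprod S := \prod_(U : {set T} | (U \subset S) && (U != set0)) sigU U.

Variables (phi : {rmorphism R -> R}) (l : T).
Hypothesis phi0 : phi (x l) = 0.
Hypothesis phi1 : forall j, j != l -> phi (x j) = x j.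

Lemma phi_sig U : phi (sigU U) = sigU (U :\ l).
Proof.
rewrite rmorph_sum /sigU.
rewrite (bigID (fun j => j == l)) /= big1 ?add0r; last by move=> j /andP[_ /eqP ->].
by apply: eq_big => [j|j /andP[_ nj]]; [rewrite !inE andbC | exact: phi1].
Qed.

Lemma setD1_id U : l \notin U -> U :\ l = U.
Proof. by move=> nl; apply/setP => j; rewrite !inE; case: eqP => // ->; rewrite (negbTE nl). Qed.

Lemma set1_n0 (a : T) : [set a] != set0.
Proof. by apply/set0Pn; exists a; exact: set11. Qed.

Lemma phiN_out S K : l \in S -> [set l] \notin K -> phi (Nprod S K) = 0.
Proof.
move=> lS nK; rewrite rmorph_prod (bigD1 [set l]) /=; last first.
  by rewrite sub1set lS set1_n0 nK.
by rewrite phi_sig setDv /sigU big_set0 mul0r.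
Qed.

Lemma phiN_in S K : maxchain S K -> l \in S -> [set l] \in K ->
  phi (Nprod S K) = Qprod (S :\ l) * Nprod (S :\ l) (proj l K).
Proof.
move=> M lS Hl.
rewrite rmorph_prod (bigID (fun U => l \in U)) /= mulrC.
congr (_ * _).
  apply: eq_big => [U|U /andP[_ nU]]; last by rewrite phi_sig (setD1_id nU).
  case: (boolP (l \in U)) => lU.
    by rewrite /= andbF subsetD1 lU /= andbF.
  have nK : U \notin K by apply/negP => /(mc_l M Hl); rewrite (negbTE lU).
  by rewrite /= andbT subsetD1 lU nK !andbT.
rewrite (reindex_onto (fun V => l |: V) (fun U => U :\ l)) /=; last first.
  by move=> U /andP[_ lU]; rewrite setD1K.
apply: eq_big => [V|V /andP[_ /eqP E]]; last by rewrite phi_sig E.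
case: (boolP (l \in V)) => lV.
  have -> : ((l |: V) :\ l == V) = false.
    by apply/negbTE/eqP => E; have := setD11 l (l |: V); rewrite E lV.
  by rewrite andbF subsetD1 lV /= andbF.
rewrite setU1K // eqxx andbT setU11 andbT subUset sub1set lS /= subsetD1 lV andbT.
have n0 : l |: V != set0 by apply/set0Pn; exists l; exact: setU11.
rewrite n0 /= (memK _ M Hl) setU11 /= -setD1_eq0 ?setU11 // setU1K //.
by rewrite andbT negb_or andbA.
Qed.

End Core.

Section Core2.
Local Open Scope ring_scope.
Variables (T : finType) (R : idomainType) (x : T -> R).
Hypothesis Hphi : forall l, exists phi : {rmorphism R -> R},
  phi (x l) = 0 /\ forall j, j != l -> phi (x j) = x j.
Hypothesis Hsig : forall U : {set T}, U != set0 -> sigU x U != 0.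
Hypothesis Hchar : forall z : int, z%:~R = 0 :> R -> z = 0.

Theorem core S (c : {set {set T}} -> int) :
  (forall K, c K != 0 -> maxchain S K) ->
  \sum_K (c K)%:~R * Nprod x S K = 0 -> forall K, c K = 0.
Proof.
have [n] := ubnP #|S|; elim: n S c => // n IH S c HS Hc Hsum K0.
case: (eqVneq (c K0) 0) => // nz.
have M0 := Hc _ nz.
case: (eqVneq S set0) => [S0|nS].
  have K0e : forall K, c K != 0 -> K = set0.
    move=> K /Hc /mcP [_ _]; rewrite S0 cards0 => /eqP; rewrite cards_eq0.
    by move/eqP.
  move: Hsum; rewrite (bigD1 set0) //= big1 ?addr0; last first.
    move=> K nK; case: (eqVneq (c K) 0) => [->|/K0e E]; first by rewrite mul0r.
    by rewrite E eqxx in nK.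
  have -> : Nprod x S set0 = 1.
    by rewrite /Nprod big_pred0 // => U; rewrite S0 subset0 andbN.
  by rewrite mulr1 => /Hchar; rewrite -(K0e _ nz) => E; rewrite E eqxx in nz.
have [l Hl] := mc_single M0 nS.
have lS : l \in S by have [H1 _ _] := mcP M0; rewrite -sub1set; exact: (H1 _ Hl).1.
have [phi [p0 p1]] := Hphi l.
pose c' (K' : {set {set T}}) := \sum_(K : {set {set T}} | ([set l] \in K) && (proj l K == K')) c K.
have Hc' : forall K', c' K' != 0 -> maxchain (S :\ l) K'.
  move=> K' nz'.
  case: (pickP (fun K : {set {set T}} => ([set l] \in K) && (proj l K == K') && (c K != 0))).
    by move=> K /andP[/andP[a /eqP <-] d]; apply: proj_mc (Hc _ d) a lS.
  move=> none; move: nz'; rewrite /c' big1 ?eqxx // => K HK.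
  by move: (none K); rewrite HK /= => /negbFE/eqP.
have QneQ : Qprod x (S :\ l) != 0 by apply/prodf_neq0 => U /andP[_ /Hsig].
have Hsum' : \sum_K' (c' K')%:~R * Nprod x (S :\ l) K' = 0.
  have : phi (\sum_K (c K)%:~R * Nprod x S K) = 0 by rewrite Hsum rmorph0.
  rewrite rmorph_sum.
  have E1 : \sum_K phi ((c K)%:~R * Nprod x S K) = Qprod x (S :\ l) *
      \sum_(K : {set {set T}} | [set l] \in K) (c K)%:~R * Nprod x (S :\ l) (proj l K).
    rewrite big_distrr /= (bigID (fun K : {set {set T}} => [set l] \in K)) /=.
    rewrite [X in _ + X]big1 ?addr0.
      apply: eq_bigr => K HK; rewrite rmorphM rmorph_int.
      case: (eqVneq (c K) 0) => [->|nK]; first by rewrite !mul0r mulr0.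
      by rewrite (phiN_in p0 p1 (Hc _ nK) lS HK) mulrCA.
    by move=> K nK; rewrite rmorphM (phiN_out p0 p1 lS nK) mulr0.
  rewrite E1 => /eqP; rewrite mulf_eq0 (negbTE QneQ) /= => /eqP E2.
  apply: (etrans _ E2).
  rewrite [RHS](partition_big (proj l) xpredT) //=; apply: eq_bigr => K' _.
  rewrite /c' (big_morph _ (@intrD R) (mulr0z 1)) big_distrl.
  by apply: eq_bigr => K /andP[_ /eqP ->].
have cardS : (#|S :\ l| < n)%N.
  by move: HS; rewrite (cardsD1 l S) lS.
have := IH (S :\ l) c' cardS Hc' Hsum' (proj l K0).
rewrite /c' (bigD1 K0) ?Hl ?eqxx //= big1 ?addr0.
  by move=> E; rewrite E eqxx in nz.
move=> K /andP[/andP[HK /eqP pK] nK].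
case: (eqVneq (c K) 0) => // nzK.
by have := proj_inj (Hc _ nzK) M0 HK Hl pK => E; rewrite E eqxx in nK.
Qed.

End Core2.

Section PartE.
Local Open Scope ring_scope.
Variable I : finType.
Local Notation n := #|I|.
Local Notation Rp := {mpoly rat[n]}.
Definition xv (j : I) : Rp := 'X_(enum_rank j).

Lemma Hphi_m l : exists phi : {rmorphism Rp -> Rp},
  phi (xv l) = 0 /\ forall j, j != l -> phi (xv j) = xv j.
Proof.
pose lq := [tuple (if i == enum_rank l then 0 else 'X_i : Rp) | i < n].
exists (comp_mpoly lq); split.
  by rewrite /xv /= comp_mpolyXU -tnth_nth tnth_mktuple eqxx.
move=> j nj; rewrite /xv /= comp_mpolyXU -tnth_nth tnth_mktuple.
case: eqP => // /enum_rank_inj E; by rewrite E eqxx in nj.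
Qed.

Definition v1 : 'I_n -> rat := fun _ => 1.

Lemma Hsig_m (U : {set I}) : U != set0 -> sigU xv U != 0.
Proof.
move=> nU; apply/negP => /eqP E.
have := congr1 (meval v1) E; rewrite rmorph0 /sigU rmorph_sum.
under eq_bigr do rewrite /xv /= mevalXU.
rewrite sumr_const => /eqP; rewrite pnatr_eq0 => /eqP /eqP.
by rewrite cards_eq0 (negbTE nU).
Qed.

Lemma Hchar_m (z : int) : z%:~R = 0 :> Rp -> z = 0.
Proof.
move=> E; have := congr1 (meval v1) E; rewrite rmorph0 rmorph_int.
by move/eqP; rewrite intr_eq0 => /eqP.
Qed.


Lemma totP (r : relI I) : is_total_order r ->
  [/\ forall i, r i i, forall i j, r i j -> r j i -> i = j,
      forall i j k, r i j -> r j k -> r i k & forall i j, r i j || r j i].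
Proof.
case/andP=> /andP[/andP[/forallP a /forallP b] /forallP c] /forallP d; split.
- by [].
- by move=> i j H1 H2; apply/eqP; move/forallP: (b i) => /(_ j) /implyP; apply; rewrite H1.
- by move=> i j k H1 H2; move/forallP: (c i) => /(_ j) /forallP /(_ k) /implyP; apply; rewrite H1.
- by move=> i j; move/forallP: (d i).
Qed.

Definition suf (r : relI I) (i : I) : {set I} := [set j | r i j].
Definition chain (r : relI I) : {set {set I}} := suf r @: setT.

Lemma suf_inj r : is_total_order r -> injective (suf r).
Proof.
case/totP=> rf an _ _ i k E.
have a : k \in suf r i by rewrite E inE rf.
have b : i \in suf r k by rewrite -E inE rf.
move: a b; rewrite !inE; exact: an.
Qed.

Lemma chain_mc r : is_total_order r -> maxchain setT (chain r).
Proof.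
move=> t; have [rf an tr to] := totP t.
apply/andP; split; [apply/andP; split|].
- apply/forall_inP => U /imsetP [i _ ->]; rewrite subsetT /=.
  by apply/set0Pn; exists i; rewrite inE rf.
- apply/forall_inP => U /imsetP [i _ ->]; apply/forall_inP => V /imsetP [k _ ->].
  case/orP: (to i k) => H.
    by apply/orP; right; apply/subsetP => j; rewrite !inE => /(tr _ _ _ H).
  by apply/orP; left; apply/subsetP => j; rewrite !inE => /(tr _ _ _ H).
- rewrite card_in_imset //; move=> i k _ _; exact: suf_inj.
Qed.

Lemma chain_rel r : is_total_order r -> forall i j,
  r i j = [forall U in chain r, (i \in U) ==> (j \in U)].
Proof.
move=> t i j; have [rf an tr to] := totP t; apply/idP/idP.
  move=> H; apply/forall_inP => U /imsetP [k _ ->]; rewrite !inE.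
  by apply/implyP => H2; apply: tr H2 H.
move/forall_inP => H; have := H (suf r i) (imset_f _ (in_setT i)); rewrite !inE.
by rewrite rf /=.
Qed.

Lemma chain_inj r1 r2 : is_total_order r1 -> is_total_order r2 ->
  chain r1 = chain r2 -> r1 = r2.
Proof.
move=> t1 t2 E; apply/ffunP => i; apply/ffunP => j.
by rewrite (chain_rel t1) (chain_rel t2) E.
Qed.

Definition dr (r : relI I) : Rp := \prod_i sigU xv (suf r i).

Lemma dr_neq0 r : is_total_order r -> dr r != 0.
Proof.
move=> t; have [rf _ _ _] := totP t.
apply/prodf_neq0 => i _; apply: Hsig_m; apply/set0Pn; exists i; by rewrite inE rf.
Qed.

Lemma Dfact r : is_total_order r ->
  Qprod xv setT = dr r * Nprod xv setT (chain r).
Proof.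
move=> t; rewrite /Qprod /Nprod (bigID (fun U => U \in chain r)) /=.
congr (_ * _).
rewrite /dr; transitivity (\prod_(U in chain r) sigU xv U).
  apply: eq_bigl => U; rewrite subsetT /= andbC; case: (boolP (U \in _)) => //= HU.
  have [H1 _ _] := mcP (chain_mc t); exact: (H1 U HU).2.
rewrite big_imset; last exact: (in2W (suf_inj t)).
by apply: eq_bigl => i; rewrite in_setT.
Qed.

Lemma iota_basisE r : iota_basis r = (tofrac (dr r))^-1.
Proof.
rewrite /iota_basis /dr rmorph_prod; congr (_^-1); apply: eq_bigr => i _.
rewrite /sigU rmorph_sum; apply: eq_bigl => j; by rewrite inE.
Qed.

Lemma kappaE (P : shrub_data I) : kappa P =
  \sum_(r | is_total_order r) (compatible P r)%:R * iota_basis r.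
Proof.
rewrite /kappa /iota; apply: eq_bigr => r t.
by rewrite gammaE t ratr_nat.
Qed.

Lemma kappa_compat (P1 P2 : shrub_data I) : kappa P1 = kappa P2 ->
  forall r, is_total_order r -> compatible P1 r = compatible P2 r.
Proof.
move=> E.
pose cr (r : relI I) : int := (compatible P1 r)%:Z - (compatible P2 r)%:Z.
have S1 : \sum_(r | is_total_order r) (cr r)%:~R * Nprod xv setT (chain r) = 0.
  apply/eqP; rewrite -tofrac_eq0 rmorph_sum /=; apply/eqP.
  have : tofrac (Qprod xv setT) * (kappa P1 - kappa P2) = 0 by rewrite E subrr mulr0.
  move=> E0; apply: etrans _ E0.
  rewrite !kappaE -sumrB mulr_sumr; apply: eq_bigr => r t.
  rewrite rmorphM rmorph_int /cr intrB -!pmulrn -mulrBl iota_basisE (Dfact t).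
  rewrite rmorphM [RHS]mulrC -!mulrA mulKf //.
  by rewrite tofrac_eq0 dr_neq0.
pose c (K : {set {set I}}) : int :=
  \sum_(r | is_total_order r && (chain r == K)) cr r.
have Hc : forall K, c K != 0 -> maxchain setT K.
  move=> K; case: (pickP (fun r => is_total_order r && (chain r == K))).
    by move=> r /andP[t /eqP <-] _; apply: chain_mc.
  by move=> none; rewrite /c big_pred0 ?eqxx.
have Hs : \sum_K (c K)%:~R * Nprod xv setT K = 0.
  apply: etrans _ S1; rewrite [RHS](partition_big chain xpredT) //=; apply: eq_bigr => K _.
  rewrite /c (big_morph _ (@intrD _) (mulr0z 1)) big_distrl.
  by apply: eq_bigr => r /andP[_ /eqP ->].
move=> r t; have := core (@Hphi_m) Hsig_m (@Hchar_m) Hc Hs (chain r).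
rewrite /c (bigD1 r) ?t ?eqxx //= big1 ?addr0.
  by rewrite /cr => /eqP; rewrite subr_eq0 => /eqP [];
    case: (compatible P1 r); case: (compatible P2 r).
move=> r' /andP[/andP[t' /eqP E'] ne].
by rewrite (chain_inj t' t E') eqxx in ne.
Qed.

End PartE.

Theorem mainTheorem15 (I : finType) :
  (forall P1 P2 : shrub_data I, is_shrub P1 -> is_shrub P2 ->
     gamma P1 = gamma P2 -> P1 = P2) /\
  (forall P1 P2 : shrub_data I, is_shrub P1 -> is_shrub P2 ->
     kappa P1 = kappa P2 -> P1 = P2).
Proof.
split; first exact: gamma_inj.
move=> P1 P2 S1 S2 E; apply: inj_of_compat => //; exact: kappa_compat.
Qed.
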